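(* Let $\mathsf{X}\subset\mathbb{R}^p$ and $\mathsf{Y}\subset\mathbb{R}^q$, and let $\tilde s(x\mid\gamma)$ (a pdf in $x\in\mathsf{X}$ for each $\gamma\in\mathsf{Y}$) and $\tilde h(\gamma\mid x)$ (a pdf in $\gamma\in\mathsf{Y}$ for each $x\in\mathsf{X}$) be conditional densities, and define the Markov transition densities $k(x,x')=\int_{\mathsf{Y}}\tilde s(x'\mid\gamma)\tilde h(\gamma\mid x)d\gamma$ on $\mathsf{X}$ and $\tilde k(\gamma,\gamma')=\int_{\mathsf{X}}\tilde h(\gamma'\mid x)\tilde s(x\mid\gamma)dx$ on $\mathsf{Y}$. Suppose $\int_{\mathsf{X}}V(x')k(x,x')dx'\le\lambda V(x)+L$ for all $x\in\mathsf{X}$, where $V:\mathsf{X}\to[0,\infty)$, $\lambda\in[0,1)$ and $L<\infty$. Let $c$ be a constant such that $\tilde V(\gamma)=\int_{\mathsf{X}}V(x)\tilde s(x\mid\gamma)dx+c$ is finite and non-negative for all $\gamma\in\mathsf{Y}$. Then for all $\gamma\in\mathsf{Y}$, $\int_{\mathsf{Y}}\tilde V(\gamma')\tilde k(\gamma,\gamma')d\gamma'\le\lambda\tilde V(\gamma)+\tilde L$, where $\tilde L=L+c(1-\lambda)$. *)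

(* Defs.v *)
From HB Require Import structures.
From mathcomp Require Import all_boot all_order all_algebra.
From mathcomp Require Import all_classical all_reals all_analysis.
Set Implicit Arguments. Unset Strict Implicit. Unset Printing Implicit Defensive.
Import Order.TTheory GRing.Theory Num.Theory.
Local Open Scope classical_set_scope.
Local Open Scope ring_scope.
Local Open Scope ereal_scope.

(* Conventions: s x g stands for \tilde s(x | g), h g x for \tilde h(g | x). *)

Definition is_pdf (R : realType) (d : measure_display) (T : measurableType d)
  (mu : {measure set T -> \bar R}) (D : set T) (f : T -> R) : Prop :=
  measurable_fun D f /\ (forall t, D t -> (0 <= f t)%R) /\
  \int[mu]_(t in D) (f t)%:E = 1.

Definition kX (R : realType) (d2 : measure_display) (T1 : Type)
  (T2 : measurableType d2) (nu : {measure set T2 -> \bar R}) (Y : set T2)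
  (s : T1 -> T2 -> R) (h : T2 -> T1 -> R) (x x' : T1) : \bar R :=
  \int[nu]_(g in Y) (s x' g * h g x)%:E.

Definition kY (R : realType) (d1 : measure_display) (T1 : measurableType d1)
  (T2 : Type) (mu : {measure set T1 -> \bar R}) (X : set T1)
  (s : T1 -> T2 -> R) (h : T2 -> T1 -> R) (g g' : T2) : \bar R :=
  \int[mu]_(x in X) (h g' x * s x g)%:E.

Definition Vtilde (R : realType) (d1 : measure_display) (T1 : measurableType d1)
  (T2 : Type) (mu : {measure set T1 -> \bar R}) (X : set T1)
  (s : T1 -> T2 -> R) (V : T1 -> R) (c : R) (g : T2) : \bar R :=
  \int[mu]_(x in X) (V x * s x g)%:E + c%:E.

(* Main.v *)
Require Import Defs.
From HB Require Import structures.
From mathcomp Require Import all_boot all_order all_algebra.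
From mathcomp Require Import all_classical all_reals all_analysis.
From mathcomp Require Import measurable_realfun lebesgue_integral_theory.lebesgue_integral_fubini.
From mathcomp Require Import ring.
Import Order.TTheory GRing.Theory Num.Theory.
Local Open Scope classical_set_scope.
Local Open Scope ring_scope.
Local Open Scope ereal_scope.

Section SF.
Context d (T : measurableType d) (R : realType) (mu : {measure set T -> \bar R})
  (H : sigma_finite setT mu).
Definition sfm : set T -> \bar R := let _ := H in mu.
HB.instance Definition _ := Measure.on sfm.
HB.instance Definition _ := @Measure_isSigmaFinite.Build d T R sfm H.
End SF.

Lemma mcomp2 dW (W : measurableType dW) d1 d2 d3 (A : measurableType d1)
  (B : measurableType d2) (C : measurableType d3) (f : A * B -> C)
  (a : W -> A) (b : W -> B) :
  measurable_fun setT f -> measurable_fun setT a -> measurable_fun setT b ->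
  measurable_fun setT (fun w => f (a w, b w)).
Proof. by move=> mf ma mb; apply: measurableT_comp => //; exact: measurable_fun_pair. Qed.
Section Helpers.
Context d (T : measurableType d) (R : realType) (m : {measure set T -> \bar R}).

Lemma int_ext0 (D : set T) (f F : T -> \bar R) :
  (forall x, D x -> f x = F x) -> (forall x, ~ D x -> F x = 0) ->
  \int[m]_(x in D) f x = \int[m]_x F x.
Proof.
move=> hD hN; rewrite integral_mkcond; apply: eq_integral => x _.
rewrite patchE; case: ifPn => [/set_mem/hD //|/negP xD].
by rewrite hN // => Dx; apply: xD; exact/mem_set.
Qed.

Lemma int_zero (f : T -> \bar R) : (forall x, f x = 0) -> \int[m]_x f x = 0.
Proof.
by move=> h; rewrite (eq_integral (fun _ => 0)) ?integral0 // => x _; exact: h.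
Qed.

Lemma int_shift (D : set T) (mD : measurable D) (a w : T -> \bar R) (c : R) :
  measurable_fun D a -> measurable_fun D w ->
  (forall x, D x -> 0 <= a x) -> (forall x, D x -> 0 <= a x + c%:E) ->
  (forall x, D x -> 0 <= w x) ->
  \int[m]_(x in D) w x = 1 ->
  \int[m]_(x in D) ((a x + c%:E) * w x) = \int[m]_(x in D) (a x * w x) + c%:E.
Proof.
move=> ma mw a0 ac0 w0 w1.
have mac : measurable_fun D (fun x => a x + c%:E).
  by apply: emeasurable_funD => //; exact: measurable_cst.
have [c0|c0] := leP 0%R c.
- rewrite (eq_integral (fun x => a x * w x + c%:E * w x)); last first.
    by move=> x /set_mem Dx; rewrite ge0_muleDl // ?lee_fin //; exact: a0.
  rewrite ge0_integralD //.
  + by rewrite ge0_integralZl_EFin // w1 mule1.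
  + by move=> x Dx; apply: mule_ge0; [exact: a0|exact: w0].
  + exact: emeasurable_funM.
  + by move=> x Dx; apply: mule_ge0; [rewrite lee_fin|exact: w0].
  + exact: measurable_funeM.
- have e : \int[m]_(x in D) (a x * w x) =
      \int[m]_(x in D) ((a x + c%:E) * w x) + (- c)%:E.
    rewrite (eq_integral (fun x => (a x + c%:E) * w x + (- c)%:E * w x)); last first.
      move=> x /set_mem Dx; rewrite -ge0_muleDl; [|exact: ac0|].
      + by rewrite -addeA -EFinD subrr adde0.
      + by rewrite lee_fin oppr_ge0 ltW.
    rewrite ge0_integralD //.
    + by rewrite ge0_integralZl_EFin ?w1 ?mule1 // oppr_ge0 ltW.
    + by move=> x Dx; apply: mule_ge0; [exact: ac0|exact: w0].
    + exact: emeasurable_funM.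
    + by move=> x Dx; apply: mule_ge0; [rewrite lee_fin oppr_ge0 ltW|exact: w0].
    + exact: measurable_funeM.
  by rewrite e -addeA -EFinD addNr adde0.
Qed.

End Helpers.
Theorem proposition2 (R : realType)
  (d1 : measure_display) (T1 : measurableType d1) (mu : {measure set T1 -> \bar R})
  (d2 : measure_display) (T2 : measurableType d2) (nu : {measure set T2 -> \bar R})
  (X : set T1) (Y : set T2)
  (s : T1 -> T2 -> R) (h : T2 -> T1 -> R)
  (V : T1 -> R) (lam L c : R) :
  sigma_finite setT mu -> sigma_finite setT nu ->
  measurable X -> measurable Y ->
  measurable_fun (X `*` Y) (fun z : T1 * T2 => s z.1 z.2) ->
  measurable_fun (Y `*` X) (fun z : T2 * T1 => h z.1 z.2) ->
  (forall g, Y g -> is_pdf mu X (fun x => s x g)) ->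
  (forall x, X x -> is_pdf nu Y (fun g => h g x)) ->
  measurable_fun X V -> (forall x, X x -> (0 <= V x)%R) ->
  (0 <= lam)%R -> (lam < 1)%R ->
  (forall x, X x ->
     \int[mu]_(x' in X) ((V x')%:E * kX nu Y s h x x') <= (lam * V x + L)%:E) ->
  (forall g, Y g -> Vtilde mu X s V c g \is a fin_num /\ 0 <= Vtilde mu X s V c g) ->
  forall g, Y g ->
    \int[nu]_(g' in Y) (Vtilde mu X s V c g' * kY mu X s h g g')
      <= lam%:E * Vtilde mu X s V c g + (L + c * (1 - lam))%:E.
Proof.
move=> sfmu sfnu mX mY ms mh spdf hpdf mV V0ge lam0 lam1 hdrift hVt g Yg.
pose m1 := sfm _ _ _ mu sfmu.
pose m2 := sfm _ _ _ nu sfnu.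
have ms0 := (measurable_restrictT (fun z : T1 * T2 => s z.1 z.2) (measurableX mX mY)).1 ms.
have mh0 := (measurable_restrictT (fun z : T2 * T1 => h z.1 z.2) (measurableX mY mX)).1 mh.
have mV0 := (measurable_restrictT V mX).1 mV.
move: ms0 mh0 mV0.
set s0 := patch _ (X `*` Y) _.
set h0 := patch _ (Y `*` X) _.
set V0 := patch _ X _.
move=> ms0 mh0 mV0.
have s0E x y : X x -> Y y -> s0 (x, y) = s x y.
  by move=> Xx Yy; rewrite /s0 patchE ifT //; apply/mem_set.
have s0N x y : ~ X x \/ ~ Y y -> s0 (x, y) = 0%R.
  move=> H; rewrite /s0 patchE ifF //; apply/negbTE/negP => /set_mem [/= Xx Yy].
  by case: H.
have h0E y x : Y y -> X x -> h0 (y, x) = h y x.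
  by move=> Yy Xx; rewrite /h0 patchE ifT //; apply/mem_set.
have h0N y x : ~ Y y \/ ~ X x -> h0 (y, x) = 0%R.
  move=> H; rewrite /h0 patchE ifF //; apply/negbTE/negP => /set_mem [/= Yy Xx].
  by case: H.
have V0E x : X x -> V0 x = V x.
  by move=> Xx; rewrite /V0 patchE ifT //; apply/mem_set.
have V0N x : ~ X x -> V0 x = 0%R.
  by move=> nX; rewrite /V0 patchE ifF //; apply/negbTE/negP => /set_mem.
have s0ge z : (0 <= s0 z)%R.
  case: z => x y; rewrite /s0 patchE; case: ifPn => [/set_mem [/= Xx Yy]|_] //.
  by have [_ [+ _]] := spdf y Yy; apply.
have h0ge z : (0 <= h0 z)%R.
  case: z => y x; rewrite /h0 patchE; case: ifPn => [/set_mem [/= Yy Xx]|_] //.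
  by have [_ [+ _]] := hpdf x Xx; apply.
have V0ge' x : (0 <= V0 x)%R.
  by rewrite /V0 patchE; case: ifPn => [/set_mem Xx|_] //; exact: V0ge.
have sint y : Y y -> \int[mu]_(x in X) (s x y)%:E = 1 by move=> Yy; case: (spdf y Yy) => _ [].
have hint x : X x -> \int[nu]_(y in Y) (h y x)%:E = 1 by move=> Xx; case: (hpdf x Xx) => _ [].
have mfst1 : measurable_fun setT (@fst T2 T1) := measurable_fst.
pose F3 (g' : T2) (x x' : T1) := (V0 x' * s0 (x', g') * (h0 (g', x) * s0 (x, g)))%:E.
have mF3 dW (W : measurableType dW) (p1 : W -> T2) (p2 p3 : W -> T1) :
    measurable_fun setT p1 -> measurable_fun setT p2 -> measurable_fun setT p3 ->
    measurable_fun setT (fun w => F3 (p1 w) (p2 w) (p3 w)).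
  move=> mp1 mp2 mp3; apply/measurable_EFinP.
  apply: measurable_funM; apply: measurable_funM.
  - exact: measurableT_comp mV0 mp3.
  - exact: mcomp2.
  - exact: mcomp2.
  - by apply: mcomp2 => //; exact: measurable_cst.
have F3ge g' x x' : 0 <= F3 g' x x'.
  by rewrite lee_fin !mulr_ge0.
pose A g' := \int[mu]_(x in X) (V x * s x g')%:E.
pose A0 g' := \int[mu]_x (V0 x * s0 (x, g'))%:E.
pose K0 g' := \int[mu]_x (h0 (g', x) * s0 (x, g))%:E.
have AA0 g' : Y g' -> A g' = A0 g'.
  move=> Yg'; apply: int_ext0 => [x Xx|x nX]; first by rewrite V0E ?s0E.
  by rewrite s0N ?mulr0 //; left.
have kK0 g' : Y g' -> kY mu X s h g g' = K0 g'.
  move=> Yg'; apply: int_ext0 => [x Xx|x nX]; first by rewrite h0E ?s0E.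
  by rewrite s0N ?mulr0 //; left.
have K0N g' : ~ Y g' -> K0 g' = 0.
  by move=> nY; apply: int_zero => x; rewrite h0N ?mul0r //; left.
have mA0 : measurable_fun setT A0.
  apply: (measurable_fun_fubini_tonelli_F (m2 := m1)
    (fun z : T2 * T1 => (V0 z.2 * s0 (z.2, z.1))%:E)).
    apply/measurable_EFinP; apply: measurable_funM.
      exact: measurableT_comp mV0 measurable_snd.
    exact: mcomp2.
  by move=> z; rewrite lee_fin mulr_ge0.
have mK0 : measurable_fun setT K0.
  apply: (measurable_fun_fubini_tonelli_F (m2 := m1)
    (fun z : T2 * T1 => (h0 z * s0 (z.2, g))%:E)).
    apply/measurable_EFinP; apply: measurable_funM => //.
    by apply: mcomp2 => //; exact: measurable_cst.
  by move=> z; rewrite lee_fin mulr_ge0.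
have A0ge g' : 0 <= A0 g' by apply: integral_ge0 => x _; rewrite lee_fin mulr_ge0.
have K0ge g' : 0 <= K0 g' by apply: integral_ge0 => x _; rewrite lee_fin mulr_ge0.
have claim1 : \int[nu]_(g' in Y) kY mu X s h g g' = 1.
  rewrite (@int_ext0 _ _ _ nu Y _ K0 kK0 K0N) /K0.
  rewrite (fubini_tonelli (m1 := m2) (m2 := m1)
    (fun z : T2 * T1 => (h0 z * s0 (z.2, g))%:E)); last 2 first.
  - apply/measurable_EFinP; apply: measurable_funM => //.
    by apply: mcomp2 => //; exact: measurable_cst.
  - by move=> z; rewrite lee_fin mulr_ge0.
  rewrite /= (eq_integral (fun x => (s0 (x, g))%:E)); last first.
    move=> x _; have [Xx|nX] := pselect (X x); last first.
      by rewrite s0N; [apply: int_zero => y; rewrite mulr0|left].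
    rewrite (eq_integral (fun y => (h0 (y, x))%:E * (s0 (x, g))%:E)); last first.
      by move=> y _; rewrite EFinM.
    have mhx : measurable_fun setT (fun y => (h0 (y, x))%:E).
      by apply/measurable_EFinP; apply: mcomp2 => //; exact: measurable_cst.
    have f0 : forall y, setT y -> 0 <= (h0 (y, x))%:E by move=> *; rewrite lee_fin.
    have k0 : 0 <= (s0 (x, g))%:E by rewrite lee_fin.
    rewrite (ge0_integralZr _ measurableT mhx f0 k0).
    rewrite -(@int_ext0 _ _ _ nu Y (fun y => (h y x)%:E) (fun y => (h0 (y, x))%:E)) ?hint ?mul1e //.
      by move=> y Yy; rewrite h0E.
    by move=> y nY; rewrite h0N //; left.
  rewrite -(@int_ext0 _ _ _ m1 X (fun x => (s x g)%:E) (fun x => (s0 (x, g))%:E)); first exact: sint.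
    by move=> x Xx; rewrite s0E.
  by move=> x nX; rewrite s0N //; left.
pose kk x x' := \int[m2]_y (s0 (x', y) * h0 (y, x))%:E.
have claim2 : \int[nu]_(g' in Y) (A g' * kY mu X s h g g') <=
    \int[mu]_(x in X) (((lam * V x)%:E + L%:E) * (s x g)%:E).
  rewrite (@int_ext0 _ _ _ nu Y _ (fun g' => A0 g' * K0 g')); last 2 first.
  - by move=> g' Yg'; rewrite AA0 ?kK0.
  - by move=> g' nY; rewrite K0N ?mule0.
  rewrite (@int_ext0 _ _ _ mu X _ (fun x => ((lam * V0 x + L) * s0 (x, g))%:E)); last 2 first.
  - by move=> x Xx; rewrite V0E ?s0E // -EFinD -EFinM.
  - by move=> x nX; rewrite s0N ?mulr0 //; left.
  rewrite (eq_integral (fun g' => \int[mu]_x \int[mu]_x' F3 g' x x')); last first.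
    move=> g' _.
    have mf : measurable_fun setT (fun x => (h0 (g', x) * s0 (x, g))%:E).
      apply/measurable_EFinP; apply: measurable_funM.
        by apply: mcomp2 => //; exact: measurable_cst.
      by apply: mcomp2 => //; exact: measurable_cst.
    have f0 : forall x, setT x -> 0 <= (h0 (g', x) * s0 (x, g))%:E.
      by move=> x _; rewrite lee_fin mulr_ge0.
    rewrite /K0 -(ge0_integralZl _ measurableT mf f0 (A0ge g')).
    apply: eq_integral => x _.
    have mf' : measurable_fun setT (fun x' => (V0 x' * s0 (x', g'))%:E).
      apply/measurable_EFinP; apply: measurable_funM.
        by [].
      by apply: mcomp2 => //; exact: measurable_cst.
    have f0' : forall x', setT x' -> 0 <= (V0 x' * s0 (x', g'))%:E.
      by move=> x' _; rewrite lee_fin mulr_ge0.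
    have k0 : 0 <= (h0 (g', x) * s0 (x, g))%:E by rewrite lee_fin mulr_ge0.
    rewrite /A0 -(ge0_integralZr _ measurableT mf' f0' k0).
    by apply: eq_integral => x' _; rewrite -EFinM.
  rewrite (fubini_tonelli (m1 := m2) (m2 := m1)
    (fun z : T2 * T1 => \int[m1]_x' F3 z.1 z.2 x')); last 2 first.
  - apply: (measurable_fun_fubini_tonelli_F (m2 := m1)
      (fun w : (T2 * T1) * T1 => F3 w.1.1 w.1.2 w.2)); last by move=> w; exact: F3ge.
    apply: mF3 => //.
      exact: measurableT_comp measurable_fst measurable_fst.
    exact: measurableT_comp measurable_snd measurable_fst.
  - by move=> z; apply: integral_ge0 => x' _; exact: F3ge.
  apply: ge0_le_integral => //.
  - by move=> x _; apply: integral_ge0 => y _; apply: integral_ge0 => x' _; exact: F3ge.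
  - apply: (measurable_fun_fubini_tonelli_F (m2 := m2)
      (fun z : T1 * T2 => \int[m1]_x' F3 z.2 z.1 x')).
      apply: (measurable_fun_fubini_tonelli_F (m2 := m1)
        (fun w : (T1 * T2) * T1 => F3 w.1.2 w.1.1 w.2)); last by move=> w; exact: F3ge.
      apply: mF3 => //.
        exact: measurableT_comp measurable_snd measurable_fst.
      exact: measurableT_comp measurable_fst measurable_fst.
    by move=> z; apply: integral_ge0 => x' _; exact: F3ge.
  - apply/measurable_EFinP; apply: measurable_funM.
      apply: measurable_funD; last exact: measurable_cst.
      by apply: measurable_funM => //; exact: measurable_cst.
    by apply: mcomp2 => //; exact: measurable_cst.
  move=> x _.
  rewrite /= (fubini_tonelli (m1 := m2) (m2 := m1)
    (fun z : T2 * T1 => F3 z.1 x z.2)); last 2 first.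
  - by apply: mF3 => //; exact: measurable_cst.
  - by move=> z; exact: F3ge.
  rewrite (eq_integral (fun x' => (V0 x' * s0 (x, g))%:E * kk x x')); last first.
    move=> x' _.
    have mf : measurable_fun setT (fun y => (s0 (x', y) * h0 (y, x))%:E).
      apply/measurable_EFinP; apply: measurable_funM.
        by apply: mcomp2 => //; exact: measurable_cst.
      by apply: mcomp2 => //; exact: measurable_cst.
    have f0 : forall y, setT y -> 0 <= (s0 (x', y) * h0 (y, x))%:E.
      by move=> y _; rewrite lee_fin mulr_ge0.
    rewrite /kk -(ge0_integralZl_EFin _ measurableT f0 mf); last by rewrite mulr_ge0.
    by apply: eq_integral => y _; rewrite -EFinM /F3; congr EFin; ring.
  rewrite (eq_integral (fun x' => (s0 (x, g))%:E * ((V0 x')%:E * kk x x'))); last first.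
    by move=> x' _ /=; rewrite EFinM muleA (muleC (s0 (x, g))%:E).
  have mkk : measurable_fun setT (kk x).
    apply: (measurable_fun_fubini_tonelli_F (m2 := m2)
      (fun z : T1 * T2 => (s0 z * h0 (z.2, x))%:E)).
      apply/measurable_EFinP; apply: measurable_funM => //.
      by apply: mcomp2 => //; exact: measurable_cst.
    by move=> z; rewrite lee_fin mulr_ge0.
  have kkge x' : 0 <= kk x x' by apply: integral_ge0 => y _; rewrite lee_fin mulr_ge0.
  rewrite ge0_integralZl_EFin //; last 2 first.
  - by move=> x' _; rewrite mule_ge0 // lee_fin.
  - by apply: emeasurable_funM => //; apply/measurable_EFinP.
  have [Xx|nX] := pselect (X x); last first.
    by rewrite s0N ?mul0e ?mulr0 //; left.
  rewrite V0E // mulrC EFinM; apply: lee_wpmul2l; first by rewrite lee_fin.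
  rewrite -(@int_ext0 _ _ _ m1 X (fun x' => (V x')%:E * kX nu Y s h x x')
    (fun x' => (V0 x')%:E * kk x x')); first exact: hdrift.
    move=> x' Xx'; rewrite V0E //; congr (_ * _).
    apply: int_ext0 => [y Yy|y nY]; first by rewrite s0E ?h0E.
    by rewrite s0N ?mul0r //; right.
  by move=> x' nX'; rewrite V0N ?mul0e.
have Age g' : Y g' -> 0 <= A g'.
  by move=> Yg'; apply: integral_ge0 => x Xx; rewrite lee_fin; apply: mulr_ge0; [exact: V0ge|exact: (spdf g' Yg').2.1].
have mA : measurable_fun Y A.
  apply: (eq_measurable_fun A0); last exact: measurable_funTS.
  by move=> g' /set_mem Yg'; rewrite AA0.
have mK : measurable_fun Y (kY mu X s h g).
  apply: (eq_measurable_fun K0); last exact: measurable_funTS.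
  by move=> g' /set_mem Yg'; rewrite kK0.
have Kge g' : Y g' -> 0 <= kY mu X s h g g' by move=> Yg'; rewrite kK0.
have e1 := @int_shift _ _ _ nu Y mY A (kY mu X s h g) c mA mK Age
  (fun g' Yg' => (hVt g' Yg').2) Kge claim1.
have kXge x x' : X x -> X x' -> 0 <= kX nu Y s h x x'.
  move=> Xx Xx'; apply: integral_ge0 => y Yy; rewrite lee_fin; apply: mulr_ge0.
    exact: (spdf y Yy).2.1.
  exact: (hpdf x Xx).2.1.
have mVs : measurable_fun X (fun x => (lam * V x)%:E).
  by apply/measurable_EFinP; apply: measurable_funM => //; exact: measurable_cst.
have msg : measurable_fun X (fun x => (s x g)%:E).
  by apply/measurable_EFinP; exact: (spdf g Yg).1.
have e2 := @int_shift _ _ _ mu X mX (fun x => (lam * V x)%:E) (fun x => (s x g)%:E) L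
  mVs msg (fun x Xx => ltac:(by rewrite lee_fin mulr_ge0 // V0ge))
  (fun x Xx => ltac:(by rewrite -EFinD; apply: le_trans (hdrift x Xx);
     apply: integral_ge0 => x' Xx'; rewrite mule_ge0 ?kXge // lee_fin V0ge))
  (fun x Xx => ltac:(by rewrite lee_fin; exact: (spdf g Yg).2.1))
  (sint g Yg).
have e3 : \int[mu]_(x in X) ((lam * V x)%:E * (s x g)%:E) = lam%:E * A g.
  rewrite (eq_integral (fun x => lam%:E * (V x * s x g)%:E)); last first.
    by move=> x _; rewrite -!EFinM mulrA.
  rewrite ge0_integralZl_EFin //.
    by move=> x Xx; rewrite lee_fin; apply: mulr_ge0; [exact: V0ge|exact: (spdf g Yg).2.1].
  apply/measurable_EFinP; apply: measurable_funM => //; exact: (spdf g Yg).1.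
have finA : A g \is a fin_num.
  by have [+ _] := hVt g Yg; rewrite /Vtilde fin_numD => /andP[].
rewrite e1 /Vtilde -/(A g).
apply: le_trans (_ : lam%:E * A g + L%:E + c%:E <= _).
  by rewrite leeD2r // -e3 -e2.
rewrite -(fineK finA) -EFinD -!EFinM -!EFinD lee_fin.
by rewrite le_eqVlt; apply/orP; left; apply/eqP; ring.
Qed.
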